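(* Let $V$ be a vector space. For sentences $S=S_1|\cdots|S_n$ and $W=W_1|\cdots|W_k$ in $T(T(V)_+)$ with all $S_i,W_j\in T(V)_+$ and $n,k\ge1$: $S*W=\sum_{f}\big(S_1*W_{f^{-1}(\{1\})}\big)|\cdots|\big(S_n*W_{f^{-1}(\{n\})}\big)$, where the sum runs over all injective maps $f:\{1,\dots,k\}\hookrightarrow\{1,\dots,n\}$ (so the sum is $0$ if $k>n$).
   Context: $T(V)_+=\bigoplus_{n\ge1}V^{\otimes n}$ with $*$ the concatenation product of $T(V)$. $T(T(V)_+)$ is the tensor Hopf algebra on $T(V)_+$ (sentences), product $|$, elements of $T(V)_+$ primitive. For $I=\{i_1<\dots<i_l\}\subseteq\{1,\dots,k\}$, $W_I=W_{i_1}|\cdots|W_{i_l}$, and $W_\emptyset=1$. The product $*$ is extended to $T(T(V)_+)$ as the unique bilinear map with, for all $f,g,h\in T(T(V)_+)$ and $y\in T(V)_+$: $\varepsilon(f*g)=\varepsilon(f)\varepsilon(g)$; $\Delta(f*g)=\Delta(f)*\Delta(g)$; $f*1=f$; $1*f=\varepsilon(f)1$; $f*(g|y)=(f*g)*y-f*(g*y)$; $(f|g)*h=(f*h^{(1)})|(g*h^{(2)})$; $(f*g)*h=f*\big((g*h^{(1)})|h^{(2)}\big)$. *)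

(* Defs.v *)
From HB Require Import structures.
From mathcomp Require Import all_boot all_order all_algebra.
From mathcomp Require Import finmap.
From mathcomp Require Import monalg.

Set Implicit Arguments.
Unset Strict Implicit.
Unset Printing Implicit Defensive.

Import GRing.Theory.
Local Open Scope ring_scope.

Section TTV.
Variables (K : fieldType) (A : choiceType).
(* A is a basis of the vector space V = K^(A). *)

(* Nonempty words over A (basis of T(V)_+): head letter and tail. *)
Definition word := (A * seq A)%type.
Definition wcat (w w' : word) : word := (w.1, w.2 ++ w'.1 :: w'.2).

(* Sentences: words of words (basis of T(T(V)_+)). *)
Definition sent := seq word.

(* T(V)_+, T(T(V)_+) and T(T(V)_+) (x) T(T(V)_+) as free K-modules. *)
Definition TVp := {malg K[word]}.
Definition TTV := {malg K[sent]}.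
Definition TTV2 := {malg K[(sent * sent)%type]}.

Definition lin (X : choiceType) (M : lmodType K) (F : X -> M)
  (g : {malg K[X]}) : M := \sum_(k <- msupp g) g@_k *: F k.

Definition bilin (X Y : choiceType) (M : lmodType K) (F : X -> Y -> M)
  (g : {malg K[X]}) (h : {malg K[Y]}) : M :=
  lin (fun x => lin (F x) h) g.

Definition conc : TVp -> TVp -> TVp := bilin (fun w w' => << wcat w w' >>).

Definition incl : TVp -> TTV := lin (fun w => << [:: w] : sent >>).

Definition tone : TTV := << [::] : sent >>.
Definition eps (f : TTV) : K := f@_([::] : sent).
Definition bar : TTV -> TTV -> TTV := bilin (fun s t => << s ++ t >>).
Definition Delta : TTV -> TTV2 :=
  lin (fun s : sent => \sum_(m : (size s).-tuple bool)
         << (mask m s, mask (map negb m) s) >>).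

Definition tens (f g : TTV) : TTV2 := bilin (fun s t => << (s, t) >>) f g.

Definition star2 (star : TTV -> TTV -> TTV) : TTV2 -> TTV2 -> TTV2 :=
  bilin (fun p q => tens (star << p.1 >> << q.1 >>) (star << p.2 >> << q.2 >>)).

Definition sentence (k : nat) (W : 'I_k -> TVp) (I : seq 'I_k) : TTV :=
  foldr (fun j acc => bar (incl (W j)) acc) tone I.

Definition is_ext_star (star : TTV -> TTV -> TTV) : Prop :=
  (forall (a : K) f g h, star (a *: f + g) h = a *: star f h + star g h) /\
  (forall (a : K) f g h, star f (a *: g + h) = a *: star f g + star f h) /\
  (forall x y : TVp, star (incl x) (incl y) = incl (conc x y)) /\
  (forall f g, eps (star f g) = eps f * eps g) /\
  (forall f g, Delta (star f g) = star2 star (Delta f) (Delta g)) /\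
  (forall f, star f tone = f) /\
  (forall f, star tone f = eps f *: tone) /\
  (forall f g (y : TVp),
     star f (bar g (incl y)) = star (star f g) (incl y) - star f (star g (incl y))) /\
  (forall f g h,
     star (bar f g) h =
     lin (fun p : sent * sent => bar (star f << p.1 >>) (star g << p.2 >>)) (Delta h)) /\
  (forall f g h,
     star (star f g) h =
     star f (lin (fun p : sent * sent => bar (star g << p.1 >>) << p.2 >>) (Delta h))).

End TTV.

(* Main.v *)
Require Import Defs.
From HB Require Import structures.
From mathcomp Require Import all_boot all_order all_algebra.
From mathcomp Require Import finmap.
From mathcomp Require Import monalg.
Set Implicit Arguments. Unset Strict Implicit. Unset Printing Implicit Defensive.
Import GRing.Theory.
Local Open Scope ring_scope.

Section Lin.
Variables (K : fieldType) (X : choiceType) (M : lmodType K).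
Implicit Types (g h : {malg K[X]}).

Definition islin (L : {malg K[X]} -> M) := forall (a : K) g h, L (a *: g + h) = a *: L g + L h.

Lemma linEw (F : X -> M) g (d : {fset X}) : (msupp g `<=` d)%fset ->
  lin F g = \sum_(k <- d) g@_k *: F k.
Proof.
move=> le; rewrite /lin [LHS](big_fset_incl _ le) => //= x xd /mcoeff_outdom ->.
by rewrite scale0r.
Qed.

Lemma lin_islin (F : X -> M) : islin (lin F).
Proof.
move=> a g h.
rewrite (@linEw F (a *: g + h) (msupp g `|` msupp h `|` msupp (a *: g + h))%fset); last first.
  by apply/fsubsetP=> x; rewrite !inE => ->; rewrite !orbT.
rewrite (@linEw F g (msupp g `|` msupp h `|` msupp (a *: g + h))%fset); last first.
  by apply/fsubsetP=> x; rewrite !inE => ->.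
rewrite (@linEw F h (msupp g `|` msupp h `|` msupp (a *: g + h))%fset); last first.
  by apply/fsubsetP=> x; rewrite !inE => ->; rewrite ?orbT.
rewrite scaler_sumr -big_split /=; apply: eq_bigr => k _.
by rewrite mcoeffD mcoeffZ scalerDl scalerA.
Qed.

Section IsLin.
Variable L : {malg K[X]} -> M.
Hypothesis HL : islin L.
Lemma islin0 : L 0 = 0.
Proof.
have e := HL 1 0 0; rewrite !scale1r addr0 in e.
by apply: (addrI (L 0)); rewrite -e addr0.
Qed.
Lemma islinD g h : L (g + h) = L g + L h.
Proof. by have := HL 1 g h; rewrite !scale1r. Qed.
Lemma islinZ a g : L (a *: g) = a *: L g.
Proof. by rewrite -[a *: g]addr0 HL islin0 addr0. Qed.
Lemma islinN g : L (- g) = - L g.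
Proof. by rewrite -(scaleN1r g) islinZ scaleN1r. Qed.
Lemma islinB g h : L (g - h) = L g - L h.
Proof. by rewrite islinD islinN. Qed.
Lemma islin_sum (I : Type) (r : seq I) (P : pred I) (F : I -> {malg K[X]}) :
  L (\sum_(i <- r | P i) F i) = \sum_(i <- r | P i) L (F i).
Proof.
elim: r => [|i r IH]; first by rewrite !big_nil islin0.
by rewrite !big_cons; case: (P i); rewrite ?islinD IH.
Qed.
Lemma islin_repr g : L g = lin (fun x => L << x >>) g.
Proof.
rewrite {1}(monalgE g) islin_sum /lin; apply: eq_bigr => k _.
have -> : << g@_k *g k >> = g@_k *: << k >> :> {malg K[X]}.
  by apply/malgP => x; rewrite mcoeffZ !mcoeffU mulr_natr.
by rewrite islinZ.
Qed.
End IsLin.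

Lemma lin_eq (F G : X -> M) g : (forall x, F x = G x) -> lin F g = lin G g.
Proof. by move=> e; rewrite /lin; apply: eq_bigr => k _; rewrite e. Qed.

Lemma linU (F : X -> M) x : lin F << x >> = F x.
Proof. by rewrite (@linEw F _ [fset x]%fset) ?msuppU_le // big_seq_fset1 mcoeffUU scale1r. Qed.

Lemma lin_ext (L1 L2 : {malg K[X]} -> M) : islin L1 -> islin L2 ->
  (forall x, L1 << x >> = L2 << x >>) -> forall g, L1 g = L2 g.
Proof.
move=> h1 h2 e g; rewrite (islin_repr h1) (islin_repr h2); exact: lin_eq.
Qed.
End Lin.
Section Bi.
Variables (K : fieldType) (X Y Z : choiceType) (M : lmodType K).

Lemma lin_linF (F G : X -> M) (a : K) g :
  lin (fun x => a *: F x + G x) g = a *: lin F g + lin G g.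
Proof.
by rewrite /lin scaler_sumr -big_split; apply: eq_bigr => k _; rewrite scalerDr !scalerA mulrC.
Qed.

Lemma lin_linF0 g : lin (fun x : X => (0 : M)) g = 0.
Proof. by rewrite /lin big1 // => k _; rewrite scaler0. Qed.

Lemma islin_comp (N : lmodType K) (L1 : {malg K[X]} -> {malg K[Y]}) (L2 : {malg K[Y]} -> N) :
  islin L1 -> islin L2 -> islin (fun g => L2 (L1 g)).
Proof. by move=> h1 h2 a g h /=; rewrite h1 h2. Qed.

Lemma bilin_linl (F : X -> Y -> M) h : islin (fun g => bilin F g h).
Proof. exact: lin_islin. Qed.

Lemma bilin_linr (F : X -> Y -> M) g : islin (bilin F g).
Proof.
move=> a h h'; rewrite /bilin -lin_linF; apply: lin_eq => x; exact: lin_islin.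
Qed.

Lemma bilinUU (F : X -> Y -> M) x y : bilin F << x >> << y >> = F x y.
Proof. by rewrite /bilin !linU. Qed.

Lemma bilinU (F : X -> Y -> M) x h : bilin F << x >> h = lin (F x) h.
Proof. by rewrite /bilin !linU. Qed.

Lemma ext2 (B1 B2 : {malg K[X]} -> {malg K[Y]} -> M) :
  (forall h, islin (fun g => B1 g h)) -> (forall g, islin (B1 g)) ->
  (forall h, islin (fun g => B2 g h)) -> (forall g, islin (B2 g)) ->
  (forall x y, B1 << x >> << y >> = B2 << x >> << y >>) -> forall g h, B1 g h = B2 g h.
Proof.
move=> l1 r1 l2 r2 e g h.
apply: (@lin_ext _ _ _ (fun g => B1 g h) (fun g => B2 g h)) => // x.
exact: lin_ext.
Qed.
End Bi.
Section More.
Variables (K : fieldType).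

Lemma lin_coef0 (X Y : choiceType) (F : X -> {malg K[Y]}) (g : {malg K[X]}) k :
  (forall x, (F x)@_k = 0) -> (lin F g)@_k = 0.
Proof.
move=> h; rewrite /lin raddf_sum big1 // => x _ /=; by rewrite mcoeffZ h mulr0.
Qed.

Lemma lin_comp (X : choiceType) (M : lmodType K) (L : M -> M) (F : X -> M) g :
  (forall (a : K) u v, L (a *: u + v) = a *: L u + L v) ->
  L (lin F g) = lin (fun x => L (F x)) g.
Proof.
move=> hL; rewrite /lin.
have L0 : L 0 = 0.
  have e := hL 1 0 0; rewrite !scale1r addr0 in e.
  by apply: (addrI (L 0)); rewrite -e addr0.
elim: (msupp g : seq X) => [|x r IH]; first by rewrite !big_nil.
by rewrite !big_cons hL IH.
Qed.

Lemma islin_addF (X : choiceType) (M : lmodType K) (L1 L2 : {malg K[X]} -> M) :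
  islin L1 -> islin L2 -> islin (fun g => L1 g + L2 g).
Proof.
move=> h1 h2 a g h; rewrite h1 h2 scalerDr.
by rewrite -!addrA; congr (_ + _); rewrite addrCA.
Qed.

Lemma islin_sumF (X : choiceType) (M : lmodType K) (I : Type) (r : seq I)
   (F : I -> {malg K[X]} -> M) :
  (forall i, islin (F i)) -> islin (fun g => \sum_(i <- r) F i g).
Proof.
move=> h a g g'; rewrite scaler_sumr -big_split; apply: eq_bigr => i _; exact: h.
Qed.

Lemma islin_id (X : choiceType) : islin (fun g : {malg K[X]} => g).
Proof. by []. Qed.

Lemma tuple_split (M : zmodType) n (F : n.+1.-tuple bool -> M) :
  \sum_(m : n.+1.-tuple bool) F m =
  \sum_(m : n.-tuple bool) (F [tuple of true :: m] + F [tuple of false :: m]).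
Proof.
rewrite (reindex (fun p : bool * n.-tuple bool => [tuple of p.1 :: p.2])) /=; last first.
  exists (fun m : n.+1.-tuple bool => (thead m, [tuple of behead m])).
    by case=> b m _; congr (_, _); apply: val_inj.
  by move=> m _; apply: val_inj => /=; case: m => [[|b s]] //=.
rewrite -(pair_big xpredT xpredT (fun b (m : n.-tuple bool) => F [tuple of b :: m])) /=.
by rewrite big_bool /= big_split /= addrC.
Qed.

Lemma tuple_zero (M : zmodType) (F : 0.-tuple bool -> M) :
  \sum_(m : 0.-tuple bool) F m = F [tuple].
Proof.
rewrite (big_pred1 [tuple]) // => m /=; symmetry; apply/eqP; exact: tuple0.
Qed.
End More.
Section TT.
Variables (K : fieldType) (A : choiceType).
Local Notation TVp := (TVp K A).
Local Notation TTV := (TTV K A).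
Local Notation TTV2 := (TTV2 K A).
Local Notation tone := (tone K A).

Lemma bar_linl (h : TTV) : islin (fun g : TTV => bar g h).
Proof. exact: bilin_linl. Qed.
Lemma bar_linr (g : TTV) : islin (bar g).
Proof. exact: bilin_linr. Qed.
Lemma barUU (s t : sent A) : bar << s >> << t >> = << s ++ t >> :> TTV.
Proof. exact: bilinUU. Qed.
Lemma tens_linl (h : TTV) : islin (fun g : TTV => tens g h).
Proof. exact: bilin_linl. Qed.
Lemma tens_linr (g : TTV) : islin (tens g).
Proof. exact: bilin_linr. Qed.
Lemma tensUU (s t : sent A) : tens << s >> << t >> = << (s, t) >> :> TTV2.
Proof. exact: bilinUU. Qed.
Lemma conc_linl (h : TVp) : islin (fun g : TVp => conc g h).
Proof. exact: bilin_linl. Qed.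
Lemma conc_linr (g : TVp) : islin (conc g).
Proof. exact: bilin_linr. Qed.
Lemma incl_lin : islin (@incl K A).
Proof. exact: lin_islin. Qed.
Lemma Delta_lin : islin (@Delta K A).
Proof. exact: lin_islin. Qed.

Lemma bar_assoc (f g h : TTV) : bar (bar f g) h = bar f (bar g h).
Proof.
move: f; apply: lin_ext.
  exact: (islin_comp (bar_linl g) (bar_linl h)).
  exact: bar_linl.
move=> s; move: g; apply: lin_ext.
  exact: (islin_comp (bar_linr _) (bar_linl h)).
  exact: (islin_comp (bar_linl h) (bar_linr _)).
move=> t; move: h; apply: lin_ext.
  exact: bar_linr.
  exact: (islin_comp (bar_linr _) (bar_linr _)).
by move=> u; rewrite !barUU catA.
Qed.

Lemma bar_tone_l (f : TTV) : bar tone f = f.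
Proof.
move: f; apply: lin_ext; [exact: bar_linr | exact: islin_id |].
by move=> s; rewrite barUU.
Qed.

Lemma bar_tone_r (f : TTV) : bar f tone = f.
Proof.
move: f; apply: lin_ext; [exact: bar_linl | exact: islin_id |].
by move=> s; rewrite barUU cats0.
Qed.

Lemma conc_assoc (f g h : TVp) : conc (conc f g) h = conc f (conc g h).
Proof.
move: f; apply: lin_ext.
  exact: (islin_comp (conc_linl g) (conc_linl h)).
  exact: conc_linl.
move=> s; move: g; apply: lin_ext.
  exact: (islin_comp (conc_linr _) (conc_linl h)).
  exact: (islin_comp (conc_linl h) (conc_linr _)).
move=> t; move: h; apply: lin_ext.
  exact: bilin_linr.
  exact: (islin_comp (conc_linr _) (conc_linr _)).
move=> u; rewrite /conc !bilinUU; congr << _ >>.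
by rewrite /wcat /= -catA.
Qed.

Lemma inclU (w : word A) : incl << w >> = << [:: w] >> :> TTV.
Proof. exact: linU. Qed.

Lemma eps_incl (y : TVp) : eps (incl y) = 0.
Proof. by apply: lin_coef0 => x; rewrite mcoeffU. Qed.

Lemma eps_bar_incl (w : TVp) (f : TTV) : eps (bar (incl w) f) = 0.
Proof.
rewrite /eps (_ : bar (incl w) f = lin (fun a => bar << [:: a] >> f) w).
  apply: lin_coef0 => a; rewrite /bar bilinU; apply: lin_coef0 => t.
  by rewrite mcoeffU.
rewrite /incl; exact: (lin_comp (L := fun u => bar u f) (fun w0 : word A => << [:: w0] >> : TTV) w (bar_linl f)).
Qed.

Lemma eps_tone : eps tone = 1.
Proof. exact: mcoeffUU. Qed.

Lemma eps_lin (a : K) (f g : TTV) : eps (a *: f + g) = a * eps f + eps g.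
Proof. by rewrite /eps mcoeffD mcoeffZ. Qed.

Lemma lin_tens (M : lmodType K) (H : TTV -> TTV -> M) :
  (forall h, islin (fun g => H g h)) -> (forall g, islin (H g)) ->
  forall f g, lin (fun p : sent A * sent A => H << p.1 >> << p.2 >>) (tens f g) = H f g.
Proof.
move=> hl hr; apply: ext2 => //.
- move=> h; exact: (islin_comp (tens_linl h) (lin_islin _)).
- move=> g; exact: (islin_comp (tens_linr g) (lin_islin _)).
by move=> s t; rewrite tensUU linU.
Qed.

Lemma lin_tens' (M : lmodType K) (H : TTV -> TTV -> M) (G : sent A * sent A -> M) f g :
  (forall s t, G (s, t) = H << s >> << t >>) ->
  (forall h, islin (fun g => H g h)) -> (forall g, islin (H g)) ->
  lin G (tens f g) = H f g.
Proof.
move=> e hl hr; rewrite -(lin_tens hl hr); apply: lin_eq; case=> s t; exact: e.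
Qed.

Definition sentL (ws : seq TVp) : TTV := foldr (fun w acc => bar (incl w) acc) tone ws.

Lemma Delta_bar_incl (w : TVp) (g : TTV) :
  Delta (bar (incl w) g) =
  lin (fun p : sent A * sent A => tens (bar (incl w) << p.1 >>) << p.2 >> +
                                  tens << p.1 >> (bar (incl w) << p.2 >>)) (Delta g).
Proof.
move: g; apply: lin_ext.
  exact: (islin_comp (bar_linr _) Delta_lin).
  exact: (islin_comp Delta_lin (lin_islin _)).
move=> t; rewrite /Delta linU -/Delta.
pose L1 := fun w : TVp => Delta (bar (incl w) << t >>).
pose L2 := fun w : TVp => \sum_(m : (size t).-tuple bool)
   (tens (bar (incl w) << mask m t >>) << mask (map negb m) t >> +
    tens << mask m t >> (bar (incl w) << mask (map negb m) t >>)).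
transitivity (L1 w) => //.
transitivity (L2 w); last first.
  rewrite /L2 (islin_sum (lin_islin _)); apply: eq_bigr => m _; by rewrite linU.
move: w; apply: lin_ext.
- exact: (islin_comp incl_lin (islin_comp (bar_linl _) Delta_lin)).
- apply: islin_sumF => m; apply: islin_addF.
    exact: (islin_comp incl_lin (islin_comp (bar_linl _) (tens_linl _))).
  exact: (islin_comp incl_lin (islin_comp (bar_linl _) (tens_linr _))).
move=> a; rewrite /L1 /L2 inclU barUU /Delta linU /= (tuple_split (n := size t)).
by apply: eq_bigr => m _; rewrite /= !barUU !tensUU.
Qed.

Lemma Delta_sentL (ws : seq TVp) :
  Delta (sentL ws) = \sum_(m : (size ws).-tuple bool)
     tens (sentL (mask m ws)) (sentL (mask (map negb m) ws)).
Proof.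
elim: ws => [|w ws IH].
  by rewrite tuple_zero /= /Delta linU tuple_zero /= tensUU.
rewrite /= Delta_bar_incl IH (islin_sum (lin_islin _)) tuple_split.
apply: eq_bigr => m _.
rewrite (@lin_tens' _ (fun a b : TTV => tens (bar (incl w) a) b + tens a (bar (incl w) b))) //.
- move=> h; apply: islin_addF.
    exact: (islin_comp (bar_linr _) (tens_linl _)).
  exact: tens_linl.
- move=> g; apply: islin_addF.
    exact: tens_linr.
  exact: (islin_comp (bar_linr _) (tens_linr _)).
Qed.

Lemma Delta_incl (y : TVp) : Delta (incl y) = tens (incl y) tone + tens tone (incl y).
Proof.
have := Delta_sentL [:: y]; rewrite /= tuple_split tuple_zero /= !bar_tone_r => ->.
by [].
Qed.

Lemma sentL_rcons (ws : seq TVp) y : sentL (rcons ws y) = bar (sentL ws) (incl y).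
Proof.
elim: ws => [|w ws IH] /=; first by rewrite bar_tone_r bar_tone_l.
by rewrite IH bar_assoc.
Qed.

Lemma eps_sentL (ws : seq TVp) : eps (sentL ws) = if ws is [::] then 1 else 0.
Proof. by case: ws => [|w ws]; rewrite /= ?eps_tone ?eps_bar_incl. Qed.
End TT.
Opaque lin incl tone bar tens conc Delta eps.
Section Star.
Variables (K : fieldType) (A : choiceType).
Local Notation TVp := (TVp K A).
Local Notation TTV := (TTV K A).
Local Notation tone := (tone K A).
Local Notation sentL := (@sentL K A).
Variable star : TTV -> TTV -> TTV.
Hypothesis Hs : is_ext_star star.

Lemma star_linl h : islin (fun f => star f h).
Proof. by case: Hs => H _ a f g; rewrite H. Qed.
Lemma star_linr f : islin (star f).
Proof. by case: Hs => _ [H _] a g h; rewrite H. Qed.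
Lemma star_incl x y : star (incl x) (incl y) = incl (conc x y).
Proof. by case: Hs => _ [_ [H _]]. Qed.
Lemma star_tone_r f : star f tone = f.
Proof. by case: Hs => _ [_ [_ [_ [_ [H _]]]]]. Qed.
Lemma star_tone_l f : star tone f = eps f *: tone.
Proof. by case: Hs => _ [_ [_ [_ [_ [_ [H _]]]]]]. Qed.
Lemma star_ruleY f g y :
  star f (bar g (incl y)) = star (star f g) (incl y) - star f (star g (incl y)).
Proof. by case: Hs => _ [_ [_ [_ [_ [_ [_ [H _]]]]]]]. Qed.
Lemma star_ruleB f g h :
  star (bar f g) h =
  lin (fun p : sent A * sent A => bar (star f << p.1 >>) (star g << p.2 >>)) (Delta h).
Proof. by case: Hs => _ [_ [_ [_ [_ [_ [_ [_ [H _]]]]]]]]. Qed.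

Lemma star_bar_lin (f g : TTV) :
  (forall h, islin (fun a => bar (star f a) (star g h))) /\
  (forall a, islin (fun h => bar (star f a) (star g h))).
Proof.
split=> h.
  exact: (islin_comp (star_linr f) (bar_linl _)).
exact: (islin_comp (star_linr g) (bar_linr _)).
Qed.

Lemma star_tone_incl y : star tone (incl y) = 0.
Proof. by rewrite star_tone_l eps_incl scale0r. Qed.

Lemma star_tone_sentL ws : star tone (sentL ws) = if ws is [::] then tone else 0.
Proof. by rewrite star_tone_l eps_sentL; case: ws => [|w ws]; rewrite ?scale1r ?scale0r. Qed.

Lemma star_sentL_incl w ws y :
  star (sentL (w :: ws)) (incl y) =
  bar (incl (conc w y)) (sentL ws) + bar (incl w) (star (sentL ws) (incl y)).
Proof.
have [hl hr] := star_bar_lin (incl w) (sentL ws).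
rewrite [sentL (w :: ws)]/= star_ruleB Delta_incl islinD; last exact: lin_islin.
pose H := (fun a b : TTV => bar (star (incl w) a) (star (sentL ws) b)).
pose G := (fun p : sent A * sent A => bar (star (incl w) << p.1 >>) (star (sentL ws) << p.2 >>)).
have e1 := (@lin_tens' _ _ _ H G (incl y) tone (fun s t => erefl) hl hr).
have e2 := (@lin_tens' _ _ _ H G tone (incl y) (fun s t => erefl) hl hr).
apply: (etrans (congr2 +%R e1 e2)).
by rewrite /H star_incl !star_tone_r.
Qed.

Lemma spanned ws y : ws != [::] -> exists r : seq (seq TVp),
  all (fun u => size u == size ws) r /\ star (sentL ws) (incl y) = \sum_(u <- r) sentL u.
Proof.
elim: ws => [|w ws IH] // _.
case: ws IH => [|w' ws] IH.
  exists [:: [:: conc w y]]; split; first by [].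
  by rewrite star_sentL_incl big_seq1 /= star_tone_incl (islin0 (bar_linr _)) addr0.
have [r [hr e]] := IH isT.
exists ((conc w y :: w' :: ws) :: map (cons w) r); split.
  rewrite /= eqxx /= all_map; apply/allP => u ur /=; exact: (allP hr u ur).
rewrite star_sentL_incl e big_cons big_map; congr (_ + _).
exact: (islin_sum (bar_linr _)).
Qed.

Lemma Zero x ws : (1 < size ws)%N -> star (incl x) (sentL ws) = 0.
Proof.
have [N] := ubnP (size ws); elim: N ws => // N IH ws.
case/lastP: ws => [|ws y] //; rewrite size_rcons => hN h1.
rewrite sentL_rcons star_ruleY.
case: ws hN h1 => [|z [|z' ws]] // hN _.
  by rewrite /= !bar_tone_r !star_incl conc_assoc subrr.
have hne : z :: z' :: ws != [::] by [].
have [r [hr e]] := spanned y hne.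
have e0 : star (incl x) (sentL [:: z, z' & ws]) = 0 by apply: IH.
rewrite e0 (islin0 (star_linl _)) e (islin_sum (star_linr _)).
rewrite big_seq big1 ?subr0 // => u ur.
have /eqP hu := allP hr u ur.
by apply: IH; rewrite hu.
Qed.
Lemma star_rec x xs ws :
  star (sentL (x :: xs)) (sentL ws) =
  \sum_(m : (size ws).-tuple bool)
     bar (star (incl x) (sentL (mask m ws))) (star (sentL xs) (sentL (mask (map negb m) ws))).
Proof.
have [hl hr] := star_bar_lin (incl x) (sentL xs).
rewrite [sentL (x :: xs)]/= star_ruleB Delta_sentL (islin_sum (lin_islin _)).
apply: eq_bigr => m _.
pose H := (fun a b : TTV => bar (star (incl x) a) (star (sentL xs) b)).
pose G := (fun p : sent A * sent A => bar (star (incl x) << p.1 >>) (star (sentL xs) << p.2 >>)).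
exact: (@lin_tens' _ _ _ H G _ _ (fun s t => erefl) hl hr).
Qed.
End Star.
Section MaskLemmas.
Variable T : eqType.

Lemma in_maskN (s : seq T) (m : seq bool) x : uniq s -> size m = size s ->
  (x \in mask (map negb m) s) = (x \in s) && ~~ (x \in mask m s).
Proof.
move=> us sm; rewrite !in_mask //; case xs: (x \in s) => //=.
by rewrite (nth_map false) // sm index_mem.
Qed.

Lemma map_in_mask (s : seq T) (m : seq bool) : uniq s -> size m = size s ->
  map (fun x => x \in mask m s) s = m.
Proof.
elim: s m => [|y s IH] [|b m] //= /andP[ys us] [sm].
rewrite mem_mask_cons eqxx andbT.
have -> : (y \in mask m s) = false by apply/negbTE; apply: contra ys; apply: mem_mask.
rewrite orbF; congr (_ :: _); rewrite -[RHS](IH m us sm); apply/eq_in_map => x xs.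
rewrite mem_mask_cons; case: eqP => [exy|]; last by rewrite andbF.
by move: ys; rewrite -exy xs.
Qed.
End MaskLemmas.

Lemma tuple_sum_cast (M : zmodType) n1 n2 (e : n1 = n2) (F : seq bool -> M) :
  \sum_(m : n1.-tuple bool) F m = \sum_(m : n2.-tuple bool) F m.
Proof. by case: n2 / e. Qed.

Lemma size_map_eq (T1 T2 : Type) (g : T1 -> T2) s : size (map g s) == size s.
Proof. by rewrite size_map. Qed.

Section Comb.
Variables (K : fieldType) (A : choiceType).
Local Notation TVp := (TVp K A).
Local Notation TTV := (TTV K A).
Local Notation tone := (tone K A).
Variable star : TTV -> TTV -> TTV.
Hypothesis Hs : is_ext_star star.
Variables (n k : nat) (S : 'I_n -> TVp) (W : 'I_k -> TVp) (i0 : 'I_n).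
Local Notation ffT := {ffun 'I_k -> 'I_n}.

Definition FF (I : seq 'I_n) (J : seq 'I_k) (f : ffT) : TTV :=
  foldr (fun i acc => bar (star (incl (S i)) (sentence W [seq j <- J | f j == i])) acc) tone I.
Definition PP (I : seq 'I_n) (J : seq 'I_k) (f : ffT) : bool :=
  [forall j, if j \in J then f j \in I else f j == i0].
Definition mtup (i : 'I_n) (J : seq 'I_k) (f : ffT) : (size J).-tuple bool :=
  Tuple (size_map_eq (fun j => f j == i) J).

Lemma sentenceE n' (V : 'I_n' -> TVp) J : sentence V J = sentL (map V J).
Proof. by rewrite /sentence /sentL foldr_map. Qed.

Lemma FF_ext (I : seq 'I_n) (J1 J2 : seq 'I_k) (f1 f2 : ffT) :
  {in I, forall i, [seq j <- J1 | f1 j == i] = [seq j <- J2 | f2 j == i]} ->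
  FF I J1 f1 = FF I J2 f2.
Proof.
elim: I => [|i I IH] h; first by [].
have e1 := h i (mem_head i I).
have e2 : FF I J1 f1 = FF I J2 f2.
  by apply: IH => i' iI; apply: h; rewrite in_cons iI orbT.
rewrite [FF (i :: I) J1 f1]/= [FF (i :: I) J2 f2]/= e1.
rewrite -/(FF I J1 f1) -/(FF I J2 f2) e2.
reflexivity.
Qed.

Lemma FF0 (I : seq 'I_n) (J : seq 'I_k) (f : ffT) i : i \in I ->
  star (incl (S i)) (sentence W [seq j <- J | f j == i]) = 0 -> FF I J f = 0.
Proof.
elim: I => [|i' I IH] //; rewrite in_cons; case: eqP => [-> _ h|_ /= iI h].
  rewrite [FF _ _ _]/= h; exact: (islin0 (bar_linl _)).
rewrite [FF _ _ _]/= -/(FF I J f) (IH iI h); exact: (islin0 (bar_linr _)).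
Qed.

Lemma claim I J : uniq I -> uniq J ->
  star (sentence S I) (sentence W J) = \sum_(f | PP I J f) FF I J f.
Proof.
elim: I J => [|i I IH] J.
- move=> _ uJ; rewrite [sentence S [::]]/= sentenceE (star_tone_sentL Hs).
  case: J uJ => [|j J] _ /=.
  + rewrite (big_pred1 [ffun => i0]) // => f; rewrite /PP.
    apply/forallP/eqP => [h|-> j]; last by rewrite ffunE ?in_nil eqxx.
    by apply/ffunP => j; rewrite ffunE; have := h j; rewrite ?in_nil => /eqP.
  + rewrite big_pred0 // => f; apply/negbTE/negP => /forallP /(_ j).
    by rewrite mem_head ?in_nil.
rewrite cons_uniq => /andP[iI uI] uJ.
rewrite [sentence S (i :: I)]/= (sentenceE S I) (sentenceE W J).
have -> : bar (incl (S i)) (sentL (map S I)) = sentL (S i :: map S I) by [].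
rewrite (star_rec Hs).
apply: (etrans (tuple_sum_cast (size_map W J) (fun m : seq bool =>
   bar (star (incl (S i)) (sentL (mask m (map W J))))
       (star (sentL (map S I)) (sentL (mask (map negb m) (map W J))))))).
rewrite (partition_big (mtup i J) xpredT) //=.
apply: eq_bigr => m _.
rewrite -!map_mask -!sentenceE IH ?mask_uniq //.
rewrite (islin_sum (bar_linr _)).
set Jm := mask m J; set Jc := mask (map negb m) J.
have memJc j : (j \in Jc) = (j \in J) && ~~ (j \in Jm).
  by rewrite /Jc /Jm in_maskN // size_tuple.
have hJm (f : ffT) : mtup i J f == m -> Jm = [seq j <- J | f j == i].
  by move/eqP/(congr1 val) => /= e; rewrite filter_mask e.
have hJc (f : ffT) : mtup i J f == m -> Jc = [seq j <- J | f j != i].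
  move/eqP/(congr1 val) => /= e; rewrite filter_mask /Jc -e -map_comp.
  by congr (mask _ J); apply: eq_map.
pose g (f : ffT) : ffT := [ffun j => if f j == i then i0 else f j].
pose h (f : ffT) : ffT := [ffun j => if j \in Jm then i else f j].
have gE (f : ffT) j : g f j = if f j == i then i0 else f j by rewrite ffunE.
have hE (f : ffT) j : h f j = if j \in Jm then i else f j by rewrite ffunE.
clearbody g h.
have iIn i' : i' \in I -> (i == i') = false.
  by move=> i'I; apply/negbTE; apply: contra iI => /eqP ->.
have FFg (f : ffT) : mtup i J f == m -> FF I J f = FF I Jc (g f).
  move=> hm; apply: FF_ext => i' i'I; rewrite (hJc f hm) -filter_predI.
  apply: eq_filter => j /=; rewrite gE.
  have [->|fji] := eqVneq (f j) i; first by rewrite iIn // andbF.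
  by rewrite andbT.
symmetry.
Time have E := @reindex_onto _ +%R 0 _ _ h g (fun f => PP (i :: I) J f && (mtup i J f == m)) (fun f => bar (star (incl (S i)) (sentence W [seq j <- J | f j == i])) (FF I J f)).
Time apply: (etrans (E _)); last first; last first.
  move=> f /andP[P1 hm]; apply/ffunP => j; rewrite hE gE (hJm f hm) mem_filter.
  have [fji|fji] := eqVneq (f j) i; rewrite /=; last by [].
  case jJ: (j \in J) => /=; first by rewrite fji.
  move/forallP: P1 => /(_ j); rewrite jJ => /eqP e.
  by rewrite e.
apply: eq_big => f'.
  apply/idP/idP.
    case/andP => /andP[P1 hm] /eqP e; rewrite -e; apply/forallP => j.
    rewrite (hJc _ hm) mem_filter.
    Time rewrite (gE (h f') j).
    have [fji|fji] := eqVneq (h f' j) i; rewrite /=; first by rewrite eqxx.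
    move/forallP: P1 => /(_ j).
    Time case: (j \in J).
    Time rewrite in_cons (negbTE fji). Time by [].
    Time by [].

  move=> P'.
  have hP' j : if j \in Jc then f' j \in I else f' j == i0 by move/forallP: P' => /(_ j).
  have hf'i j : j \in J -> (h f' j == i) = (j \in Jm).
    move=> jJ; rewrite (hE f' j); case jm: (j \in Jm); first by rewrite eqxx.
    have := hP' j; rewrite memJc jJ jm /= => fI.
    by apply/negbTE; apply: contra iI => /eqP <-.
  apply/andP; split; first (apply/andP; split).
  - apply/forallP => j; rewrite (hE f' j); case jm: (j \in Jm).
      by rewrite (mem_mask jm) mem_head.
    case jJ: (j \in J).
      by have := hP' j; rewrite memJc jJ jm /= => fI; rewrite in_cons fI orbT.
    by have := hP' j; rewrite memJc jJ.
  - apply/eqP/val_inj => /=; rewrite -[RHS](map_in_mask uJ (size_tuple m)).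
    by apply/eq_in_map => j jJ; exact: hf'i.
  - apply/eqP/ffunP => j; rewrite (gE (h f') j) (hE f' j); case jm: (j \in Jm).
      rewrite eqxx; have := hP' j; rewrite memJc jm andbF => /eqP ->.
      by [].
    have [fi|fi] := eqVneq (f' j) i; last by [].
    have := hP' j; case jc: (j \in Jc).
      by move=> fI; move: iI; rewrite -fi fI.
    by move/eqP ->.
move=> /andP[/andP[P1 hm] /eqP e].
rewrite -(hJm _ hm) (FFg _ hm) e.
reflexivity.
Qed.
End Comb.
Unset Implicit Arguments.
Set Strict Implicit.
Theorem proposition4p7 (K : fieldType) (A : choiceType)
    (star : TTV K A -> TTV K A -> TTV K A) (Hstar : is_ext_star star)
    (n k : nat) (Hn : (0 < n)%N) (Hk : (0 < k)%N)
    (S : 'I_n -> TVp K A) (W : 'I_k -> TVp K A) :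
  star (sentence S (enum 'I_n)) (sentence W (enum 'I_k)) =
  \sum_(f : {ffun 'I_k -> 'I_n} | injectiveb f)
    foldr (fun i acc => bar (star (incl (S i)) (sentence W [seq j <- enum 'I_k | f j == i])) acc)
          (tone K A) (enum 'I_n).
Proof.
pose i0 : 'I_n := Ordinal Hn.
apply: (etrans (claim Hstar S W i0 (enum_uniq _) (enum_uniq _))).
rewrite (eq_bigl xpredT); last first.
  by move=> f /=; apply/forallP => j; rewrite !mem_enum.
rewrite (bigID (fun f : {ffun 'I_k -> 'I_n} => injectiveb f)) /=.
have Z : \sum_(f : {ffun 'I_k -> 'I_n} | ~~ injectiveb f)
           FF star S W (enum 'I_n) (enum 'I_k) f = 0.
  apply: big1 => f nf.
  have [j1 [j2 [ne e]]] : exists j1 j2, j1 != j2 /\ f j1 = f j2.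
    case: (pickP (fun p : 'I_k * 'I_k => (p.1 != p.2) && (f p.1 == f p.2))).
      by case=> j1 j2 /andP[ne /eqP e]; exists j1, j2.
    move=> none; case/negP: nf; apply/injectiveP => j1 j2 e.
    by have := none (j1, j2); rewrite /= e eqxx andbT => /negbFE/eqP.
  apply: (@FF0 _ _ star _ _ S W _ _ _ (f j1)); first by rewrite mem_enum.
  rewrite sentenceE; apply: (Zero Hstar); rewrite size_map.
  have u : uniq [:: j1; j2] by rewrite /= inE ne.
  apply: (@uniq_leq_size _ [:: j1; j2]) => // x; rewrite !inE mem_filter mem_enum andbT.
  by case/orP => /eqP ->; rewrite ?e eqxx.
apply: (etrans (congr1 (fun x => _ + x) Z)); rewrite addr0.
apply: eq_bigr => f _; reflexivity.
Qed.
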